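(* $\mathsf{AP}(R_4,R_2)=\mathsf{AP}(R_4,R_3)=\mathsf{\Omega(1)}$.
   Context: Tuples in $\{0,1\}^4$ are written as strings $abcd$. The relations $R_1,\dots,R_5\subseteq\{0,1\}^4$ are $R_1=\{0000,1000,0100,1100,1010,0110,1001,0101,0011,1011,0111,1111\}$, $R_2=\{0000,1000,0100,1100,1010,0101,0011,1111\}$, $R_3=\{0000,1100,1010,0101,0011,1011,0111,1111\}$, $R_4=\{0000,1100,1010,0101,0011,1111\}$, $R_5=\{0000,1100,1010,0110,1001,0101,0011,1111\}$. For $R,S\subseteq\{0,1\}^4$, a Boolean function $f\colon\{0,1\}^n\to\{0,1\}$ is analogy-preserving relative to $(R,S)$ if for all $\mathbf{a},\mathbf{b},\mathbf{c},\mathbf{d}\in\{0,1\}^n$ with $(a_i,b_i,c_i,d_i)\in R$ for every $i$ and such that $(f(\mathbf{a}),f(\mathbf{b}),f(\mathbf{c}),x)\in S$ for some $x\in\{0,1\}$, we have $(f(\mathbf{a}),f(\mathbf{b}),f(\mathbf{c}),f(\mathbf{d}))\in S$; $\mathsf{AP}(R,S)$ is the set of all such functions of all arities. $\mathsf{\Omega(1)}$ is the set of all Boolean functions (of all arities) that are constant, a projection, or the negation of a projection. *)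

(* Defs.v *)
From mathcomp Require Import all_boot.
Set Implicit Arguments. Unset Strict Implicit. Unset Printing Implicit Defensive.

(* A relation R ⊆ {0,1}^4, given by its list of tuples (a,b,c,d);
   the string "abcd" of the paper is the tuple (a,b,c,d), 1 = true. *)
Definition rel4 := seq (bool * bool * bool * bool).

Definition inR (R : rel4) (a b c d : bool) : bool := (a, b, c, d) \in R.

Local Notation O := false.
Local Notation I := true.

Definition R1 : rel4 :=
  [:: (O,O,O,O); (I,O,O,O); (O,I,O,O); (I,I,O,O); (I,O,I,O); (O,I,I,O);
      (I,O,O,I); (O,I,O,I); (O,O,I,I); (I,O,I,I); (O,I,I,I); (I,I,I,I)].
Definition R2 : rel4 :=
  [:: (O,O,O,O); (I,O,O,O); (O,I,O,O); (I,I,O,O); (I,O,I,O); (O,I,O,I);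
      (O,O,I,I); (I,I,I,I)].
Definition R3 : rel4 :=
  [:: (O,O,O,O); (I,I,O,O); (I,O,I,O); (O,I,O,I); (O,O,I,I); (I,O,I,I);
      (O,I,I,I); (I,I,I,I)].
Definition R4 : rel4 :=
  [:: (O,O,O,O); (I,I,O,O); (I,O,I,O); (O,I,O,I); (O,O,I,I); (I,I,I,I)].
Definition R5 : rel4 :=
  [:: (O,O,O,O); (I,I,O,O); (I,O,I,O); (O,I,I,O); (I,O,O,I); (O,I,O,I);
      (O,O,I,I); (I,I,I,I)].

Definition boolfun (n : nat) := {ffun 'I_n -> bool} -> bool.

Definition AP (R S : rel4) (n : nat) (f : boolfun n) : Prop :=
  forall a b c d : {ffun 'I_n -> bool},
    (forall i : 'I_n, inR R (a i) (b i) (c i) (d i)) ->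
    (exists x : bool, inR S (f a) (f b) (f c) x) ->
    inR S (f a) (f b) (f c) (f d).

Definition Omega1 (n : nat) (f : boolfun n) : Prop :=
  (exists b : bool, forall x, f x = b) \/
  (exists i : 'I_n, forall x, f x = x i) \/
  (exists i : 'I_n, forall x, f x = ~~ x i).

(* Main.v *)
Require Import Defs.
From mathcomp Require Import all_boot.

Definition impl (S : rel4) (p q r s : bool) :=
  (inR S p q r false || inR S p q r true) ==> inR S p q r s.

Lemma APb (S : rel4) n (f : boolfun n) : AP R4 S f ->
  forall a b c d : {ffun 'I_n -> bool},
    (forall i, inR R4 (a i) (b i) (c i) (d i)) -> impl S (f a) (f b) (f c) (f d).
Proof.
move=> H a b c d Hr; apply/implyP => /orP [h|h]; apply: H => //; by eexists; exact h.
Qed.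

Lemma sq (S : rel4) : S = R2 \/ S = R3 -> forall p q r s : bool,
  impl S p q r s -> impl S p r q s -> impl S q p s r -> impl S q s p r ->
  impl S r p s q -> impl S r s p q -> impl S s q r p -> impl S s r q p ->
  p != q -> r = p /\ s = q.
Proof.
by case=> ->; case; case; case; case; vm_compute; intuition congruence.
Qed.

Lemma s1 x y z w : inR R4 x y z w -> inR R4 x z y w.
Proof. by case: x; case: y; case: z; case: w. Qed.
Lemma s2 x y z w : inR R4 x y z w -> inR R4 y x w z.
Proof. by case: x; case: y; case: z; case: w. Qed.
Lemma s3 x y z w : inR R4 x y z w -> inR R4 y w x z.
Proof. by case: x; case: y; case: z; case: w. Qed.
Lemma s4 x y z w : inR R4 x y z w -> inR R4 z x w y.
Proof. by case: x; case: y; case: z; case: w. Qed.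
Lemma s5 x y z w : inR R4 x y z w -> inR R4 z w x y.
Proof. by case: x; case: y; case: z; case: w. Qed.
Lemma s6 x y z w : inR R4 x y z w -> inR R4 w y z x.
Proof. by case: x; case: y; case: z; case: w. Qed.
Lemma s7 x y z w : inR R4 x y z w -> inR R4 w z y x.
Proof. by case: x; case: y; case: z; case: w. Qed.

Lemma R4sub S x y z w : S = R2 \/ S = R3 -> inR R4 x y z w ->
  inR S x y z w /\ inR S (~~x) (~~y) (~~z) (~~w).
Proof. by case=> ->; case: x; case: y; case: z; case: w; vm_compute; intuition congruence. Qed.

Lemma cstS S b : S = R2 \/ S = R3 -> inR S b b b b.
Proof. by case=> ->; case: b. Qed.

Lemma step (g : nat -> bool) n : g 0 != g n -> exists k, k < n /\ g k != g k.+1.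
Proof.
elim: n => [|n IH]; first by rewrite eqxx.
case E: (g n == g n.+1).
  move/eqP: E => <- /IH [k [Hk Hg]]; exists k; split => //; exact: ltnW.
by move=> _; exists n; rewrite E.
Qed.

Lemma main S : S = R2 \/ S = R3 -> forall n (f : boolfun n), AP R4 S f <-> Omega1 f.
Proof.
move=> HS n f; split; last first.
  case=> [[b Hb]|[[i Hi]|[i Hi]]] a b' c d Hr _.
  - rewrite !Hb; exact: cstS.
  - rewrite !Hi; exact: proj1 (R4sub _ _ _ _ _ HS (Hr i)).
  - rewrite !Hi; exact: proj2 (R4sub _ _ _ _ _ HS (Hr i)).
move=> Hf.
set x0 : {ffun 'I_n -> bool} := [ffun => false].
case C: [forall x, f x == f x0].
  by left; exists (f x0) => x; apply/eqP; move/forallP: C.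
move/negbT/forallPn: C => [y Hy].
pose z k : {ffun 'I_n -> bool} := [ffun j : 'I_n => if j < k then y j else false].
have z0 : z 0 = x0 by apply/ffunP => j; rewrite !ffunE.
have zn : z n = y by apply/ffunP => j; rewrite !ffunE ltn_ord.
have [|k [Hk Hg]] := step (fun k => f (z k)) n; first by rewrite /= z0 zn eq_sym.
pose i := Ordinal Hk.
set a := z k.
pose b : {ffun 'I_n -> bool} := [ffun j => if j == i then ~~ a j else a j].
have ai : a i = false by rewrite /a /z ffunE /= ltnn.
have zS : forall j, z k.+1 j = if nat_of_ord j == k then y j else a j.
  move=> j; rewrite /a /z !ffunE ltnS; by case: (ltngtP j k).
have ji : forall j, (j == i) = (nat_of_ord j == k) by [].
have Hb : f b = f (z k.+1).
  case Y: (y i).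
    congr f; apply/ffunP => j; rewrite /b ffunE zS ji.
    case E: (nat_of_ord j == k) => //.
    have -> : j = i by apply: val_inj; apply/eqP.
    by rewrite ai Y.
  exfalso; move: Hg; rewrite -/a; suff -> : z k.+1 = a by rewrite eqxx.
  apply/ffunP => j; rewrite zS.
  case E: (nat_of_ord j == k) => //.
  have -> : j = i by apply: val_inj; apply/eqP.
  by rewrite ai Y.
have Hab : f a != f b by rewrite Hb.
have key : forall w : {ffun 'I_n -> bool}, f w = if w i then f b else f a.
  move=> w.
  pose c : {ffun 'I_n -> bool} := [ffun j => if j == i then a j else w j].
  pose d : {ffun 'I_n -> bool} := [ffun j => if j == i then ~~ a j else w j].
  have Hr : forall j, inR R4 (a j) (b j) (c j) (d j).
    move=> j; rewrite /b /c /d !ffunE; case: (j == i);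
      by case: (if j < k then y j else false); case: (w j).
  have [Hc Hd] := @sq _ HS _ _ _ _ (@APb _ _ _ Hf _ _ _ _ Hr)
    (@APb _ _ _ Hf _ _ _ _ (fun j => @s1 _ _ _ _ (Hr j)))
    (@APb _ _ _ Hf _ _ _ _ (fun j => @s2 _ _ _ _ (Hr j)))
    (@APb _ _ _ Hf _ _ _ _ (fun j => @s3 _ _ _ _ (Hr j)))
    (@APb _ _ _ Hf _ _ _ _ (fun j => @s4 _ _ _ _ (Hr j)))
    (@APb _ _ _ Hf _ _ _ _ (fun j => @s5 _ _ _ _ (Hr j)))
    (@APb _ _ _ Hf _ _ _ _ (fun j => @s6 _ _ _ _ (Hr j)))
    (@APb _ _ _ Hf _ _ _ _ (fun j => @s7 _ _ _ _ (Hr j)))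
    Hab.
  case W: (w i).
    rewrite -Hd; congr f; apply/ffunP => j; rewrite ffunE.
    by case: (eqVneq j i) => [->|//]; rewrite ai W.
  rewrite -Hc; congr f; apply/ffunP => j; rewrite ffunE.
  by case: (eqVneq j i) => [->|//]; rewrite ai W.
right; move: Hab key; case: (f a); case: (f b) => // _ key.
  by right; exists i => w; rewrite key; case: (w i).
by left; exists i => w; rewrite key; case: (w i).
Qed.

Theorem mainTheorem15 :
  (forall (n : nat) (f : boolfun n), AP R4 R2 f <-> Omega1 f) /\
  (forall (n : nat) (f : boolfun n), AP R4 R3 f <-> Omega1 f).
Proof. by split; apply: main; [left|right]. Qed.
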